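(* Let $R$ be an almost Dedekind domain. Then $\mathrm{Crit}(R)$ is a closed subset of $\mathcal{M}$.
   Context: $R$ almost Dedekind: $R_M$ is a DVR for every maximal $M$. $\mathcal{M}$ is $\mathrm{Max}(R)$ with the inverse topology (restriction of the coarsest topology on $\mathrm{Spec}(R)$ in which Zariski-open Zariski-compact sets are closed). A maximal ideal $M$ is critical if for every finitely generated ideal $I\subseteq M$ there is a maximal ideal $N$ with $I\subseteq N^2$; $\mathrm{Crit}(R)$ is the set of critical maximal ideals. *)

(* Defs.v *)
From HB Require Import structures.
From mathcomp Require Import all_boot all_algebra fraction.
From mathcomp Require Import boolp classical_sets.
Set Implicit Arguments. Unset Strict Implicit. Unset Printing Implicit Defensive.
Import GRing.Theory.
Local Open Scope ring_scope.
Local Open Scope classical_set_scope.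

(** * Ideals of a subring S of a commutative ring K (S = setT for K itself) *)
Section IdealsIn.
Variable K : comNzRingType.

Definition ideal_in (S J : set K) : Prop :=
  J `<=` S /\ J 0 /\ (forall x, J x -> J (- x)) /\
  (forall x y, J x -> J y -> J (x + y)) /\
  (forall s x, S s -> J x -> J (s * x)).

Definition prime_in (S P : set K) : Prop :=
  ideal_in S P /\ ~ P 1 /\
  (forall x y, S x -> S y -> P (x * y) -> P x \/ P y).

Definition maximal_in (S M : set K) : Prop :=
  ideal_in S M /\ ~ M 1 /\
  (forall J, ideal_in S J -> M `<=` J -> J = M \/ J = S).

Definition principal_in (S J : set K) : Prop :=
  exists x, J = [set y | exists2 s, S s & y = s * x].

(** S is a discrete valuation ring: a principal ideal domain with exactly one
    nonzero prime ideal (S is a subring of a field, hence a domain). *)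
Definition DVR (S : set K) : Prop :=
  (forall J, ideal_in S J -> principal_in S J) /\
  exists P, [/\ prime_in S P, P <> [set 0] &
    forall Q, prime_in S Q -> Q <> [set 0] -> Q = P].
End IdealsIn.

Section Ring.
Variable R : idomainType.

Definition is_maximal (M : set R) := maximal_in setT M.
Definition is_prime (P : set R) := prime_in setT P.

Definition gen_ideal (l : seq R) : set R :=
  [set x | exists c : nat -> R, x = \sum_(i < size l) c i * l`_i].

Definition fg_ideal (I : set R) : Prop := exists l : seq R, I = gen_ideal l.

Definition ideal_mul (I J : set R) : set R :=
  [set x | exists (n : nat) (a b : nat -> R),
     (forall i, I (a i) /\ J (b i)) /\ x = \sum_(i < n) a i * b i].

(** the localization R_M, as the subring {a/s | s \notin M} of Frac(R) *)
Definition localization (M : set R) : set {fraction R} :=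
  [set x | exists a s, ~ M s /\
     x = FracField.tofrac a / FracField.tofrac s].

Definition almost_dedekind : Prop :=
  forall M, is_maximal M -> DVR (localization M).

Definition critical (M : set R) : Prop :=
  is_maximal M /\
  forall I, fg_ideal I -> I `<=` M ->
    exists N, is_maximal N /\ I `<=` ideal_mul N N.

Definition Crit : set (set R) := [set M | critical M].
Definition Spec : set (set R) := [set P | is_prime P].
Definition Max : set (set R) := [set M | is_maximal M].

Definition zariski_open (U : set (set R)) : Prop :=
  exists A : set R, U = [set P | Spec P /\ ~ (A `<=` P)].

Definition zariski_compact (U : set (set R)) : Prop :=
  forall (I : Type) (F : I -> set (set R)),
    (forall i, zariski_open (F i)) -> U `<=` \bigcup_i F i ->
    exists (n : nat) (g : nat -> I),
      U `<=` [set P | exists k, (k < n)%N /\ F (g k) P].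
End Ring.

Inductive gen_open (T : Type) (X0 : set T) (B : set (set T)) : set T -> Prop :=
  | gen_basic U : B U -> gen_open X0 B U
  | gen_full : gen_open X0 B X0
  | gen_inter U V : gen_open X0 B U -> gen_open X0 B V -> gen_open X0 B (U `&` V)
  | gen_union (I : Type) (F : I -> set T) :
      (forall i, gen_open X0 B (F i)) -> gen_open X0 B (\bigcup_i F i).

Section Inverse.
Variable R : idomainType.

(** inverse topology on Spec(R): coarsest topology in which the Zariski-open
    Zariski-compact sets are closed, i.e. generated by their complements *)
Definition inverse_open (V : set (set R)) : Prop :=
  gen_open (@Spec R)
    [set W | exists U, [/\ U `<=` @Spec R, zariski_open U, zariski_compact U &
                          W = @Spec R `\` U]] V.

Definition inverse_closed (C : set (set R)) : Prop :=
  C `<=` @Spec R /\ inverse_open (@Spec R `\` C).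

(** closed subsets of \mathcal{M} = Max(R) with the subspace inverse topology *)
Definition closed_in_invMax (C : set (set R)) : Prop :=
  exists C', inverse_closed C' /\ C = @Max R `&` C'.
End Inverse.

(* Main.v *)
Require Import Defs.
From mathcomp Require Import all_boot all_algebra fraction.
From mathcomp Require Import boolp classical_sets ring.
Set Implicit Arguments. Unset Strict Implicit. Unset Printing Implicit Defensive.
Import GRing.Theory.
Local Open Scope ring_scope.
Local Open Scope classical_set_scope.

Definition idl (R : idomainType) (X : set R) := ideal_in setT X.

Definition addI (R : idomainType) (A : set R) (x : R) : set R :=
  [set z | exists m r, A m /\ z = m + r * x].

Lemma idl_addI (R : idomainType) (A : set R) x : idl A -> idl (addI A x).
Proof.
move=> [_ [A0 [AN [AD AM]]]]; split; first by [].
split; first by exists 0, 0; rewrite mul0r addr0.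
split; first by move=> z [m [r [Am ->]]]; exists (- m), (- r); split; [exact: AN | rewrite opprD mulNr].
split.
  move=> z y [m [r [Am ->]]] [m' [r' [Am' ->]]].
  exists (m + m'), (r + r'); split; first exact: AD.
  by rewrite mulrDl addrACA.
move=> s z _ [m [r [Am ->]]]; exists (s * m), (s * r); split; first exact: AM.
by rewrite mulrDr mulrA.
Qed.

Lemma addI_sub (R : idomainType) (A : set R) x : A `<=` addI A x.
Proof. by move=> m Am; exists m, 0; rewrite mul0r addr0. Qed.

Lemma addI_x (R : idomainType) (A : set R) x : idl A -> addI A x x.
Proof. by move=> [_ [A0 _]]; exists 0, 1; rewrite mul1r add0r. Qed.

Lemma idl_mulr (R : idomainType) (A : set R) x y : idl A -> A x -> A (x * y).
Proof. by move=> [_ [_ [_ [_ AM]]]] Ax; rewrite mulrC; apply: AM. Qed.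

Lemma idl_mull (R : idomainType) (A : set R) x y : idl A -> A y -> A (x * y).
Proof. by move=> [_ [_ [_ [_ AM]]]] Ay; apply: AM. Qed.

Lemma idl_add (R : idomainType) (A : set R) x y : idl A -> A x -> A y -> A (x + y).
Proof. by move=> [_ [_ [_ [AD _]]]]; apply: AD. Qed.

Lemma idl0 (R : idomainType) (A : set R) : idl A -> A 0.
Proof. by move=> [_ [A0 _]]. Qed.

Lemma max_prime (R : idomainType) (M : set R) : is_maximal M -> is_prime M.
Proof.
move=> [iM [M1 Mmax]]; split; first by [].
split; first by [].
move=> x y _ _ Mxy; have [Mx|Mx] := pselect (M x); first by left.
right; have [E|E] := Mmax _ (idl_addI x iM) (@addI_sub _ M x).
  by exfalso; apply: Mx; rewrite -E; apply: addI_x.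
have : addI M x 1 by rewrite E.
move=> [m [r [Mm E1]]].
have -> : y = y * m + r * (x * y) by rewrite -[y in LHS]mulr1 E1 mulrDr mulrCA (mulrC y x).
apply: idl_add => //; [exact: idl_mull | exact: idl_mull].
Qed.

Lemma key_prime (R : idomainType) (J : set R) (a : R) :
  idl J -> (forall n, ~ J (a ^+ n)) ->
  exists P, is_prime P /\ J `<=` P /\ ~ P a.
Proof.
move=> iJ Ja.
pose Q (X : set R) := [/\ idl X, J `<=` X & forall n, ~ X (a ^+ n)].
pose PP (X : set R) := Q X \/ X = set0.
have QX : forall X x, PP X -> X x -> Q X.
  by move=> X x [//|->].
have [A [PA Amax]] : exists A, PP A /\ forall B, A `<` B -> ~ PP B.
  apply: Zorn_bigcup => F FP Ftot.
  have [[X0 [FX0 QX0]]|nQ] := pselect (exists X, F X /\ Q X); last first.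
    right; apply/seteqP; split => // x [X FX Xx].
    by apply: nQ; exists X; split => //; apply: QX (FP _ FX) Xx.
  have QF : forall X x, F X -> X x -> Q X by move=> X x FX; apply: QX (FP _ FX).
  left; split.
  - split; first by [].
    split; first by exists X0 => //; case: QX0 => ? _ _; apply: idl0.
    split.
      move=> x [X FX Xx]; exists X => //; case: (QF _ _ FX Xx) => [[_ [_ [AN _]]] _ _].
      exact: AN.
    split.
      move=> x y [X FX Xx] [Y FY Yy].
      have [XY|YX] := Ftot _ _ FX FY.
        exists Y => //; case: (QF _ _ FY Yy) => iY _ _; apply: idl_add => //; exact: XY.
      exists X => //; case: (QF _ _ FX Xx) => iX _ _; apply: idl_add => //; exact: YX.
    move=> s x _ [X FX Xx]; exists X => //; case: (QF _ _ FX Xx) => iX _ _.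
    exact: idl_mull.
  - by move=> x Jx; exists X0 => //; case: QX0 => _ JX _; apply: JX.
  - by move=> n [X FX Xx]; case: (QF _ _ FX Xx) => _ _ /(_ n).
have QJ : Q J by split.
have {PA} QA : Q A.
  case: PA => // A0; exfalso; apply: (Amax J); last by left.
  rewrite A0; split => //; move=> /(_ 0 (idl0 iJ)).
by [].
case: QA => iA JA nA.
exists A; split; last by split => //; move: (nA 1%N); rewrite expr1.
split => //; split; first by move: (nA 0%N); rewrite expr0.
move=> x y _ _ Axy; have [|nx] := pselect (A x); first by left.
have [|ny] := pselect (A y); first by right.
exfalso.
have powin : forall z, ~ A z -> exists n, addI A z (a ^+ n).
  move=> z nz; apply: contrapT => H; apply: (Amax (addI A z)).
    split; first exact: addI_sub.
    by move=> /(_ z (addI_x z iA)).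
  left; split; first exact: idl_addI.
    by move=> w /JA; apply: addI_sub.
  by move=> n Hn; apply: H; exists n.
have [n [m1 [r1 [Am1 E1]]]] := powin x nx.
have [k [m2 [r2 [Am2 E2]]]] := powin y ny.
apply: (nA (n + k)%N); rewrite exprD E1 E2.
have -> : (m1 + r1 * x) * (m2 + r2 * y) =
  m1 * (m2 + r2 * y) + (r1 * x * m2 + r1 * r2 * (x * y)).
  by ring.
apply: idl_add => //; first exact: idl_mulr.
apply: idl_add => //; first exact: idl_mull.
exact: idl_mull.
Qed.

Definition FinCov (T : Type) (I : Type) (F : I -> set T) (X : set T) :=
  exists n (g : nat -> I), X `<=` [set P | exists k, (k < n)%N /\ F (g k) P].

Lemma fincov_sub T I (F : I -> set T) X Y : X `<=` Y -> FinCov F Y -> FinCov F X.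
Proof. by move=> XY [n [g H]]; exists n, g => P /XY /H. Qed.

Lemma fincov_one T I (F : I -> set T) X i : X `<=` F i -> FinCov F X.
Proof. by move=> XF; exists 1%N, (fun _ => i) => P /XF FP; exists 0%N. Qed.

Lemma fincov_U T I (F : I -> set T) X Y :
  FinCov F X -> FinCov F Y -> FinCov F (X `|` Y).
Proof.
move=> [n1 [g1 H1]] [n2 [g2 H2]].
exists (n1 + n2)%N, (fun k => if (k < n1)%N then g1 k else g2 (k - n1)%N).
move=> P [/H1 [k [kn FP]]|/H2 [k [kn FP]]].
  by exists k; rewrite kn; split => //; apply: leq_trans kn (leq_addr _ _).
exists (n1 + k)%N; have -> : (n1 + k < n1)%N = false by rewrite ltnNge leq_addr.
rewrite addKn; split => //.
by rewrite ltn_add2l.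
Qed.

Lemma fincov_seq T I (F : I -> set T) (i0 : I) (U : eqType) (xs : seq U)
  (G : U -> set T) : (forall x, x \in xs -> FinCov F (G x)) ->
  FinCov F [set P | exists2 x, x \in xs & G x P].
Proof.
elim: xs => [|x xs IH] H.
  by exists 0%N, (fun _ => i0) => P [].
apply: (@fincov_sub _ _ _ _ (G x `|` [set P | exists2 x, x \in xs & G x P])).
  move=> P [y]; rewrite inE => /orP [/eqP -> Gx|yxs Gy]; first by left.
  by right; exists y.
apply: fincov_U; first by apply: H; rewrite inE eqxx.
by apply: IH => y yxs; apply: H; rewrite inE yxs orbT.
Qed.

Definition Dz (R : idomainType) (I : set R) : set (set R) :=
  [set P | Spec P /\ ~ (I `<=` P)].

Lemma gen_sub (R : idomainType) (l : seq R) (P : set R) :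
  idl P -> (forall x, x \in l -> P x) -> gen_ideal l `<=` P.
Proof.
move=> iP H z [c ->]; apply: (big_ind P).
- exact: idl0.
- by move=> x y; apply: idl_add.
- by move=> i _; apply: idl_mull => //; apply: H; apply: mem_nth.
Qed.

Lemma gen_mem (R : idomainType) (l : seq R) x : x \in l -> gen_ideal l x.
Proof.
move=> xl; exists (fun i => if i == index x l then 1 else 0).
have hk : (index x l < size l)%N by rewrite index_mem.
rewrite (bigD1 (Ordinal hk)) //= eqxx mul1r nth_index // big1 ?addr0 //.
move=> i ne; rewrite ifF ?mul0r //; apply: contraNF ne => /eqP e.
by apply/eqP/val_inj.
Qed.

Lemma prime_pow (R : idomainType) (P : set R) a n :
  is_prime P -> ~ P a -> ~ P (a ^+ n).
Proof.
move=> [iP [P1 Pp]] Pa; elim: n => [|n IH]; first by rewrite expr0.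
by rewrite exprS => /(Pp _ _ I I) [].
Qed.

Definition Jc (R : idomainType) (S : set R) : set R :=
  [set z | exists s : seq (R * R), (forall p, p \in s -> S p.2) /\
     z = \sum_(p <- s) p.1 * p.2].

Lemma Jc_idl (R : idomainType) (S : set R) : idl (Jc S).
Proof.
split; first by [].
split; first by exists [::]; rewrite big_nil.
split.
  move=> z [s [sS ->]]; exists (map (fun p => (- p.1, p.2)) s); split.
    by move=> p /mapP [q qs ->]; exact: (sS q qs).
  by rewrite big_map -sumrN; apply: eq_bigr => p _; rewrite mulNr.
split.
  move=> z y [s [sS ->]] [t [tS ->]]; exists (s ++ t); split; last by rewrite big_cat.
  by move=> p; rewrite mem_cat => /orP [/sS|/tS].
move=> c z _ [s [sS ->]]; exists (map (fun p => (c * p.1, p.2)) s); split.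
  by move=> p /mapP [q qs ->]; exact: (sS q qs).
by rewrite big_map mulr_sumr; apply: eq_bigr => p _; rewrite mulrA.
Qed.

Lemma S_Jc (R : idomainType) (S : set R) : S `<=` Jc S.
Proof.
move=> x Sx; exists [:: (1, x)]; split; last by rewrite big_seq1 mul1r.
by move=> p; rewrite inE => /eqP ->.
Qed.

Lemma sum_in (R : idomainType) (P : set R) (s : seq (R * R)) :
  idl P -> (forall p, p \in s -> P p.2) -> P (\sum_(p <- s) p.1 * p.2).
Proof.
move=> iP H; rewrite big_seq; apply: (big_ind P).
- exact: idl0.
- by move=> x y; apply: idl_add.
- by move=> p ps; apply: idl_mull => //; apply: H.
Qed.

Lemma D_compact (R : idomainType) (l : seq R) :
  (exists P, Dz (gen_ideal l) P) -> zariski_compact (Dz (gen_ideal l)).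
Proof.
move=> [P0 DP0] I F Fo cov.
have [i0 _ _] := cov P0 DP0.
have /choice [A HA] : forall i, exists A,
  F i = [set P | Spec P /\ ~ (A `<=` P)] by move=> i; apply: Fo.
pose S := [set x | exists i, A i x].
suff : FinCov F (Dz (gen_ideal l)) by [].
apply: (@fincov_sub _ _ _ _
   [set P | exists2 x, x \in l & [set P | Spec P /\ ~ P x] P]).
  move=> P [SP nP]; apply: contrapT => H; apply: nP.
  apply: gen_sub; first exact: SP.1.
  move=> x xl; apply: contrapT => nPx; apply: H; by exists x.
apply: (fincov_seq i0) => a al.
have [[n [s [sS E]]]|nJ] := pselect (exists n, Jc S (a ^+ n)).
  apply: (@fincov_sub _ _ _ _
    [set P | exists2 q, q \in map snd s & [set P | Spec P /\ ~ P q] P]).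
    move=> P /= [SP nPa]; apply: contrapT => H.
    apply: (@prime_pow _ _ a n SP nPa); rewrite E; apply: sum_in; first exact: SP.1.
    move=> p ps; apply: contrapT => nP; apply: H; exists p.2 => //.
    by apply: map_f.
  apply: (fincov_seq i0) => q /mapP [p ps ->].
  have [i Aip] := sS p ps.
  by apply: (@fincov_one _ _ _ _ i) => P [SP nP]; rewrite HA; split => // /(_ _ Aip).
exfalso.
have [P [SP [JP nPa]]] := key_prime (Jc_idl S) (fun n H => nJ (ex_intro _ n H)).
have [i _] := cov P (conj SP (fun H => nPa (H _ (gen_mem al)))).
rewrite HA => -[_]; apply => x Aix; apply: JP; apply: S_Jc; by exists i.
Qed.

Theorem proposition2p4 (R : idomainType) :
  @almost_dedekind R -> closed_in_invMax (@Crit R).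
Proof.
move=> _.
pose W (I : set R) := fg_ideal I /\ (forall N, is_maximal N -> ~ (I `<=` ideal_mul N N)).
pose V (I : set R) := [set P : set R | Spec P /\ I `<=` P].
pose Ub := \bigcup_(i : {I : set R | W I}) V (proj1_sig i).
have UbS : Ub `<=` @Spec R by move=> P [i _ []].
exists (@Spec R `\` Ub); split.
  split; first by move=> P [].
  have -> : @Spec R `\` (@Spec R `\` Ub) = Ub.
    apply/seteqP; split; first by move=> P [SP /not_andP [//|/contrapT]].
    by move=> P UP; split; [apply: UbS | move=> [_]].
  apply: (@gen_union _ _ _ _ (fun i : {I : set R | W I} => V (proj1_sig i))).
  move=> [I [[l El] WI]] /=.
  have [[P0 DP0]|nD] := pselect (exists P, Dz I P).
    apply: gen_basic; exists (Dz I); split.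
    - by move=> P [].
    - by exists I.
    - by rewrite El; apply: D_compact; exists P0; rewrite -El.
    - apply/seteqP; split.
        by move=> P [SP IP]; split => // -[_].
      move=> P [SP nD']; split => //; apply: contrapT => nIP; by apply: nD'.
  suff E : V I = @Spec R by rewrite E; exact: gen_full.
    apply/seteqP; split; first by move=> P [].
    move=> P SP; split => //; apply: contrapT => nIP; apply: nD; by exists P.
apply/seteqP; split.
  move=> M [Mm Mc]; split => //; split; first exact: max_prime.
  move=> [[I WI] _ [_ IM]] /=.
  have [N [Nm IN]] := Mc I WI.1 IM.
  exact: (WI.2 N Nm IN).
move=> M [Mm [SM nU]]; split => // I fI IM.
apply: contrapT => H; apply: nU.
have WI : W I.
  split => // N Nm IN; apply: H; by exists N.
by exists (exist _ I WI).
Qed.
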